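(* Let $\mathcal{K}$ be a flat Kripke structure, $\Phi=\varphi\,\mathtt{U}^{\frac{x}{y}}\psi$ an $\mathtt{fLTL}$ formula (with $x\le y$, $y>0$), and $\mathcal{P}=(P_0,\dots,P_m)$ an augmented path schema in $\mathcal{K}$ that is consistent with respect to $\varphi$ and with respect to $\psi$. Let $P=P_k$ with $k<m$ be a loop of $\mathcal{P}$ (a non-terminal loop), let $v=\ell_0\ell_1\dots\ell_{|P|-1}$ be its sequence of locations, and let $\hat n=|P|\cdot y$. Then for every run $\sigma\in\mathtt{Runs}(\mathcal{P})$ of the form $\sigma=uv^nw$ (with $u$ a finite and $w$ an infinite sequence of locations) where $n\ge\hat n+2$, there are $n_1,n_2\in\mathbb{N}$ with $n=n_1+\hat n+n_2$ (so $\sigma=uv^{n_1}v^{\hat n}v^{n_2}w$) such that for all positions $i$ on $\sigma$ with $|u|\le i<|u|+(n_1-1)|P|$ or $|u|+(n_1+\hat n)|P|\le i<|u|+(n_1+\hat n+n_2-2)|P|$ we have $(\sigma,i)\models_\mathcal{P}\Phi$ if and only if $(\sigma,i+|P|)\models_\mathcal{P}\Phi$.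
   Context: Kripke structure: $\mathcal{K}=(S,s_I,E,\lambda)$ with finite $S$, $s_I\in S$, $E\subseteq S\times S$, $\lambda:S\to2^{AP}$ for a finite set $AP$. A simple loop is a finite path $s_0\dots s_k$ of pairwise distinct states with $(s_k,s_0)\in E$; $\mathcal{K}$ is flat if every state is the first state of at most one simple loop. $\mathtt{fLTL}$: $\varphi ::= p\mid\varphi\land\varphi\mid\neg\varphi\mid\mathtt{X}\varphi\mid\varphi\,\mathtt{U}^{\frac{x}{y}}\varphi$ with $p\in AP$, $x\le y$ naturals, $y>0$; $\mathtt{sub}(\Phi)$ denotes subformulae (assume $AP\subseteq\mathtt{sub}(\Phi)$). Over an infinite state sequence $\rho$ and position $i$: $(\rho,i)\models p$ iff $p\in\lambda(\rho(i))$; Booleans as usual; $(\rho,i)\models\mathtt{X}\varphi$ iff $(\rho,i+1)\models\varphi$; $(\rho,i)\models\varphi\,\mathtt{U}^{\frac{x}{y}}\psi$ iff $(\rho,i)\models\psi$ or there is $k\ge i$ with $(\rho,k+1)\models\psi$ and $y\cdot|\{j\in[i,k]\mid(\rho,j)\models\varphi\}|\ge x(k-i+1)$. Counter system: $(Q,q_I,C,\Delta)$, $C$ finite set of counters, $\Delta\subseteq Q\times\mathbb{Z}^C\times2^{\mathrm{G}(C)}\times Q$, $\mathrm{G}(C)=\{(c<0),(c\ge0)\mid c\in C\}$; a run is $q_0q_1\dots$ with $q_0=q_I$ such that there are valuations $\theta_0=\mathbf{0},\theta_1,\dots$ and transitions $(q_i,\mathbf{u}_i,G_i,q_{i+1})\in\Delta$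 with $\theta_{i+1}=\theta_i+\mathbf{u}_i$ satisfying all guards in $G_i$. Augmented state $a=(s,L,G,\mathbf{u},t)\in S\times2^{\mathtt{sub}(\Phi)}\times2^{\mathrm{G}(C)}\times\mathbb{Z}^C\times\{\mathtt{L},\mathtt{R}\}$ with projections $\mathtt{st},\mathtt{lab},\mathtt{g},\mathtt{u},\mathtt{t}$. Augmented path: $a_0\dots a_n$ with $(\mathtt{st}(a_i),\mathtt{st}(a_{i+1}))\in E$; row: all types $\mathtt{R}$; loop: non-empty, $(\mathtt{st}(a_n),\mathtt{st}(a_0))\in E$, states pairwise distinct, all types $\mathtt{L}$. APS in $\mathcal{K}$: $\mathcal{P}=(P_0,\dots,P_m)$ of rows and loops, $P_m$ a loop, $P_0\dots P_m$ an augmented path. Locations are indices $\ell\in[0,|\mathcal{P}|-1]$ into $P_0\dots P_m$; $\mathcal{P}[\ell]$ the augmented state there; $\mathtt{loc}_\mathcal{P}(k)$ the locations of $P_k$; $\mathtt{lab}_\mathcal{P}(\ell)=\mathtt{lab}(\mathcal{P}[\ell])$, etc. $\mathtt{CS}(\mathcal{P})=(\{0,\dots,|\mathcal{P}|-1\},0,C,\Delta)$ with transitions $(\ell,\mathtt{u}_\mathcal{P}(\ell),\mathtt{g}_\mathcal{P}(\ell'),\ell')$ whenever $\ell'=\ell+1<|\mathcal{P}|$, or $\ell'<\ell$ and $\{\ell',\dots,\ell\}=\mathtt{loc}_\mathcal{P}(k)$ for a loop $P_k$; $\mathtt{succ}_\mathcal{P}(\ell)$ are the one-step successors. $\mathtt{Runs}(\mathcal{P})$: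 runs of $\mathtt{CS}(\mathcal{P})$ visiting every location at least once. For $\sigma\in\mathtt{Runs}(\mathcal{P})$, $(\sigma,i)\models_\mathcal{P}\varphi$ iff $(\mathtt{st}_\mathcal{P}(\sigma),i)\models\varphi$, where $\mathtt{st}_\mathcal{P}(\sigma)$ is the state sequence $\mathtt{st}(\mathcal{P}[\sigma(0)])\mathtt{st}(\mathcal{P}[\sigma(1)])\dots$. For $\Psi=\alpha\,\mathtt{U}^{\frac{x}{y}}\beta$, an augmented path $u$ is good/neutral/bad for $\Psi$ if $|\{i<|u|\mid\alpha\in\mathtt{lab}(u(i))\}|$ is $>,=,<\frac{x}{y}|u|$. A tuple of augmented paths is $L$-periodic if all have the same length and for every index $i$ the sets $\mathtt{lab}(P(i))\cap L$ coincide over all members $P$. Consistency: for $\ell\in\mathtt{loc}_\mathcal{P}(k)$, $\ell$ is consistent w.r.t. $\Psi$ if all locations are consistent w.r.t. all strict subformulae of $\Psi$ and: (1) $\Psi\in AP$ and ($\Psi\in\mathtt{lab}_\mathcal{P}(\ell)\Leftrightarrow\Psi\in\lambda(\mathtt{st}_\mathcal{P}(\ell))$), or $\Psi=\alpha\land\beta$ and ($\Psi\in\mathtt{lab}_\mathcal{P}(\ell)\Leftrightarrow\alpha,\beta\in\mathtt{lab}_\mathcal{P}(\ell)$), or $\Psi=\neg\alpha$ and ($\Psi\in\mathtt{lab}_\mathcal{P}(\ell)\Leftrightarrow\alpha\notin\mathtt{lab}_\mathcal{P}(\ell)$); (2) $\Psi=\mathtt{X}\alpha$ and for all $\ell'\in\mathtt{succ}_\mathcal{P}(\ell)$: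 $\Psi\in\mathtt{lab}_\mathcal{P}(\ell)\Leftrightarrow\alpha\in\mathtt{lab}_\mathcal{P}(\ell')$; (3) $\Psi=\alpha\,\mathtt{U}^{\frac{x}{y}}\beta$ and one of: (a) $\Psi,\beta\in\mathtt{lab}_\mathcal{P}(\ell)$; (b) $\Psi\in\mathtt{lab}_\mathcal{P}(\ell)$, the last component is good for $\Psi$ and contains a location labelled $\beta$; (c) $\mathtt{t}_\mathcal{P}(\ell)=\mathtt{R}$ and some counter $c$ has update $0$ at all $\ell'<\ell$, $y-x$ at all $\ell'\ge\ell$ labelled $\alpha$, $-x$ at all $\ell'\ge\ell$ not labelled $\alpha$, and: if $\Psi\notin\mathtt{lab}_\mathcal{P}(\ell)$ then $\beta\notin\mathtt{lab}_\mathcal{P}(\ell)$ and every $\ell'>\ell$ labelled $\beta$ has $(c<0)\in\mathtt{g}_\mathcal{P}(\ell')$; if $\Psi\in\mathtt{lab}_\mathcal{P}(\ell)$ then some $\ell'>\ell$ labelled $\beta$ has $(c\ge0)\in\mathtt{g}_\mathcal{P}(\ell')$; (d) some component $P_{k'}$ has all locations consistent w.r.t. $\Psi$ and: if $P_k$ is the last component then $k'<k$ and $(P_{k'},\dots,P_k)$ is $\{\alpha,\beta,\Psi\}$-periodic; if $P_k$ is not last and ($P_k$ good/neutral and $\Psi\notin\mathtt{lab}_\mathcal{P}(\ell)$, or $P_k$ bad and $\Psi\in\mathtt{lab}_\mathcal{P}(\ell)$) then $k'<k$ and $(P_{k'},\dots,P_{k+1})$ is periodic; if $P_k$ is not last and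 ($P_k$ good/neutral and $\Psi\in\mathtt{lab}_\mathcal{P}(\ell)$, or $P_k$ bad and $\Psi\notin\mathtt{lab}_\mathcal{P}(\ell)$) then $k<k'$, $P_{k'}$ not last, and $(P_k,\dots,P_{k'+1})$ is periodic. $\mathcal{P}$ is consistent w.r.t. $\Psi$ if all its locations are. *)

(* Defs.v *)
From mathcomp Require Import all_boot all_order all_algebra.
Set Implicit Arguments. Unset Strict Implicit. Unset Printing Implicit Defensive.
Import GRing.Theory Num.Theory.

Inductive fltl (AP : Type) : Type :=
| FAtom of AP
| FAnd of fltl AP & fltl AP
| FNeg of fltl AP
| FNext of fltl AP
| FUntil of fltl AP & nat & nat & fltl AP.  (* FUntil a x y b = a U^{x/y} b *)

Arguments FAtom {AP}. Arguments FAnd {AP}. Arguments FNeg {AP}.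
Arguments FNext {AP}. Arguments FUntil {AP}.

Fixpoint wf_form AP (f : fltl AP) : Prop :=
  match f with
  | FAtom _ => True
  | FAnd a b => wf_form a /\ wf_form b
  | FNeg a => wf_form a
  | FNext a => wf_form a
  | FUntil a x y b => x <= y /\ 0 < y /\ wf_form a /\ wf_form b
  end.

Definition child AP (a f : fltl AP) : Prop :=
  match f with
  | FAtom _ => False
  | FAnd b c => a = b \/ a = c
  | FNeg b => a = b
  | FNext b => a = b
  | FUntil b _ _ c => a = b \/ a = c
  end.

Inductive subf AP : fltl AP -> fltl AP -> Prop :=
| subf_refl f : subf f f
| subf_step f g h : subf f g -> child g h -> subf f h.

Definition strict_sub AP (a f : fltl AP) : Prop :=
  exists g, child g f /\ subf a g.

Record kripke (AP : finType) := Kripke {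
  kS : finType;
  kI : kS;
  kE : rel kS;
  klab : kS -> {set AP} }.
Arguments kS {AP}. Arguments kI {AP}. Arguments kE {AP}. Arguments klab {AP}.

Section KripkeDefs.
Variables (AP : finType) (K : kripke AP).

Definition simple_loop (l : seq (kS K)) : Prop :=
  0 < size l /\ uniq l /\
  (forall i, i.+1 < size l -> kE K (nth (kI K) l i) (nth (kI K) l i.+1)) /\
  kE K (last (kI K) l) (head (kI K) l).

Definition flat : Prop :=
  forall l1 l2, simple_loop l1 -> simple_loop l2 ->
    head (kI K) l1 = head (kI K) l2 -> l1 = l2.

Fixpoint fsat (rho : nat -> kS K) (f : fltl AP) (i : nat) {struct f} : Prop :=
  match f with
  | FAtom p => p \in klab K (rho i)
  | FAnd a b => fsat rho a i /\ fsat rho b i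
  | FNeg a => ~ fsat rho a i
  | FNext a => fsat rho a i.+1
  | FUntil a x y b =>
      fsat rho b i \/
      exists k, i <= k /\ fsat rho b k.+1 /\
        exists c : nat -> bool,
          (forall j, i <= j <= k -> (c j <-> fsat rho a j)) /\
          x * (k - i + 1) <= y * (\sum_(i <= j < k.+1) c j)
  end.
End KripkeDefs.

(* guards: (c, false) stands for (c < 0), (c, true) stands for (c >= 0) *)
Definition guard_holds (C : finType) (g : C * bool) (th : C -> int) : Prop :=
  if g.2 then (0 <= th g.1)%R else (th g.1 < 0)%R.

Record csys (C : finType) := CSys {
  cs_Q : Type;
  cs_qI : cs_Q;
  cs_Delta : cs_Q -> (C -> int) -> {set (C * bool)} -> cs_Q -> Prop }.

Definition is_run (C : finType) (M : csys C) (q : nat -> cs_Q M) : Prop :=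
  q 0 = cs_qI M /\
  exists (th : nat -> C -> int) (us : nat -> C -> int) (Gs : nat -> {set (C * bool)}),
    th 0 = (fun _ => 0%R) /\
    forall i, @cs_Delta C M (q i) (us i) (Gs i) (q i.+1) /\
              th i.+1 = (fun c => th i c + us i c)%R /\
              (forall g, g \in Gs i -> guard_holds g (th i.+1)).

Inductive atype := TypL | TypR.

Record astate (AP : finType) (S : Type) (C : finType) := AState {
  a_st : S;
  a_lab : fltl AP -> bool;
  a_g : {set (C * bool)};
  a_u : C -> int;
  a_t : atype }.
Arguments AState {AP S C}. Arguments a_st {AP S C}. Arguments a_lab {AP S C}.
Arguments a_g {AP S C}. Arguments a_u {AP S C}. Arguments a_t {AP S C}.

Section APS.
Variables (AP C : finType) (K : kripke AP).
Notation ast := (astate AP (kS K) C).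

Definition dflt : ast := AState (kI K) (fun _ => false) set0 (fun _ => 0%R) TypR.

Definition isL (a : ast) : bool := if a_t a is TypL then true else false.
Definition isR (a : ast) : bool := if a_t a is TypR then true else false.

Definition aug_path (l : seq ast) : Prop :=
  forall i, i.+1 < size l -> kE K (a_st (nth dflt l i)) (a_st (nth dflt l i.+1)).

Definition is_row (l : seq ast) : Prop := 0 < size l /\ all isR l /\ aug_path l.

Definition is_loop (l : seq ast) : Prop :=
  0 < size l /\ all isL l /\ aug_path l /\
  kE K (a_st (last dflt l)) (a_st (head dflt l)) /\ uniq (map a_st l).

Variable P : seq (seq ast).

Definition compP k := nth [::] P k.
Definition lastc := (size P).-1.
Definition lenP := size (flatten P).
Definition at_loc l := nth dflt (flatten P) l.
Definition lab_P l (f : fltl AP) : bool := a_lab (at_loc l) f.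
Definition startP k := sumn (map size (take k P)).
Definition inloc k l := startP k <= l < startP k + size (compP k).

Definition is_aps (Phi : fltl AP) : Prop :=
  0 < size P /\
  (forall k, k < size P -> is_row (compP k) \/ is_loop (compP k)) /\
  is_loop (compP lastc) /\
  aug_path (flatten P) /\
  (forall l f, l < lenP -> lab_P l f -> subf f Phi \/ exists p, f = FAtom p).

Definition cs_edge l l' : Prop :=
  (l' = l.+1 /\ l.+1 < lenP) \/
  (l' < l /\ exists k, k < size P /\ is_loop (compP k) /\
                       startP k = l' /\ startP k + size (compP k) = l.+1).

Definition CS : csys C :=
  @CSys C nat 0 (fun l u G l' => cs_edge l l' /\ u = a_u (at_loc l) /\ G = a_g (at_loc l')).

Definition runs (sigma : nat -> nat) : Prop :=
  is_run (M := CS) sigma /\ forall l, l < lenP -> exists i, sigma i = l.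

Definition stP (sigma : nat -> nat) : nat -> kS K := fun i => a_st (at_loc (sigma i)).

Definition sat_P (sigma : nat -> nat) (f : fltl AP) (i : nat) : Prop :=
  fsat (stP sigma) f i.

Definition cnt_lab (a : fltl AP) (u : seq ast) := count (fun s => a_lab s a) u.
Definition good a x y (u : seq ast) := x * size u < y * cnt_lab a u.
Definition neutral a x y (u : seq ast) := x * size u = y * cnt_lab a u.
Definition bad a x y (u : seq ast) := y * cnt_lab a u < x * size u.

Definition slice a b := take (b.+1 - a) (drop a P).

Definition periodic (L : fltl AP -> Prop) (ps : seq (seq ast)) : Prop :=
  forall i j, i < size ps -> j < size ps ->
    size (nth [::] ps i) = size (nth [::] ps j) /\
    forall t, t < size (nth [::] ps i) -> forall f, L f ->
      a_lab (nth dflt (nth [::] ps i) t) f = a_lab (nth dflt (nth [::] ps j) t) f.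

Definition subs_ok (cons : fltl AP -> nat -> Prop) (Psi : fltl AP) : Prop :=
  forall a, strict_sub a Psi -> forall l', l' < lenP -> cons a l'.

Inductive lcons : fltl AP -> nat -> Prop :=
| lc_atom p k l : k < size P -> inloc k l -> subs_ok lcons (FAtom p) ->
    (lab_P l (FAtom p) <-> p \in klab K (a_st (at_loc l))) ->
    lcons (FAtom p) l
| lc_and a b k l : k < size P -> inloc k l -> subs_ok lcons (FAnd a b) ->
    (lab_P l (FAnd a b) <-> lab_P l a /\ lab_P l b) ->
    lcons (FAnd a b) l
| lc_neg a k l : k < size P -> inloc k l -> subs_ok lcons (FNeg a) ->
    (lab_P l (FNeg a) <-> ~~ lab_P l a) ->
    lcons (FNeg a) l
| lc_next a k l : k < size P -> inloc k l -> subs_ok lcons (FNext a) ->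
    (forall l', cs_edge l l' -> (lab_P l (FNext a) <-> lab_P l' a)) ->
    lcons (FNext a) l
| lc_until_a a x y b k l : k < size P -> inloc k l -> subs_ok lcons (FUntil a x y b) ->
    lab_P l (FUntil a x y b) -> lab_P l b ->
    lcons (FUntil a x y b) l
| lc_until_b a x y b k l : k < size P -> inloc k l -> subs_ok lcons (FUntil a x y b) ->
    lab_P l (FUntil a x y b) -> good a x y (compP lastc) ->
    (exists l', inloc lastc l' /\ lab_P l' b) ->
    lcons (FUntil a x y b) l
| lc_until_c a x y b k l : k < size P -> inloc k l -> subs_ok lcons (FUntil a x y b) ->
    a_t (at_loc l) = TypR ->
    (exists c : C,
      (forall l', l' < l -> a_u (at_loc l') c = 0%R) /\
      (forall l', l <= l' < lenP -> lab_P l' a -> a_u (at_loc l') c = (y%:Z - x%:Z)%R) /\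
      (forall l', l <= l' < lenP -> ~~ lab_P l' a -> a_u (at_loc l') c = (- x%:Z)%R) /\
      (~~ lab_P l (FUntil a x y b) ->
         ~~ lab_P l b /\
         forall l', l < l' < lenP -> lab_P l' b -> (c, false) \in a_g (at_loc l')) /\
      (lab_P l (FUntil a x y b) ->
         exists l', l < l' < lenP /\ lab_P l' b /\ (c, true) \in a_g (at_loc l'))) ->
    lcons (FUntil a x y b) l
| lc_until_d a x y b k l : k < size P -> inloc k l -> subs_ok lcons (FUntil a x y b) ->
    (exists k', k' < size P /\
      (forall l', inloc k' l' -> lcons (FUntil a x y b) l') /\
      (k = lastc -> k' < k /\
         periodic (fun f => f = a \/ f = b \/ f = FUntil a x y b) (slice k' k)) /\
      (k <> lastc ->
         ((good a x y (compP k) \/ neutral a x y (compP k)) /\ ~~ lab_P l (FUntil a x y b)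
          \/ bad a x y (compP k) /\ lab_P l (FUntil a x y b)) ->
         k' < k /\
         periodic (fun f => f = a \/ f = b \/ f = FUntil a x y b) (slice k' k.+1)) /\
      (k <> lastc ->
         ((good a x y (compP k) \/ neutral a x y (compP k)) /\ lab_P l (FUntil a x y b)
          \/ bad a x y (compP k) /\ ~~ lab_P l (FUntil a x y b)) ->
         k < k' /\ k' <> lastc /\
         periodic (fun f => f = a \/ f = b \/ f = FUntil a x y b) (slice k k'.+1))) ->
    lcons (FUntil a x y b) l.

Definition consistent (Psi : fltl AP) : Prop := forall l, l < lenP -> lcons Psi l.

Definition locs k : seq nat := iota (startP k) (size (compP k)).
End APS.

Definition uvw (u v : seq nat) (n : nat) (w : nat -> nat) : nat -> nat :=
  fun i => if i < size u then nth 0 u i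
           else if i < size u + n * size v then nth 0 v ((i - size u) %% size v)
           else w (i - size u - n * size v).

(* Main.v *)
Require Import Defs.
From mathcomp Require Import all_boot all_order all_algebra.
From mathcomp Require Import zify.
From Stdlib Require Import Classical ClassicalEpsilon.
Set Implicit Arguments. Unset Strict Implicit. Unset Printing Implicit Defensive.

Definition cnt (A : nat -> bool) i k := \sum_(i <= j < k) (A j : nat).
Definition wit (A B : nat -> bool) x y i k : bool :=
  [&& i <= k, B k.+1 & x * (k.+1 - i) <= y * cnt A i k.+1].
Definition Usem (A B : nat -> bool) x y i : Prop := B i \/ exists k, wit A B x y i k.
Definition Per (A B : nat -> bool) p s E :=
  forall j, s <= j -> j + p <= E -> A j = A (j + p) /\ B j = B (j + p).

Lemma cnt_nil A i k : k <= i -> cnt A i k = 0.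
Proof. by move=> h; rewrite /cnt big_geq. Qed.

Lemma cnt_S A i k : i <= k -> cnt A i k.+1 = cnt A i k + A k.
Proof. by move=> h; rewrite /cnt big_nat_recr. Qed.

Lemma cnt_cat A i j k : i <= j -> j <= k -> cnt A i k = cnt A i j + cnt A j k.
Proof. by move=> h1 h2; rewrite /cnt (@big_cat_nat _ _ _ j). Qed.

Lemma cnt_le A i k : cnt A i k <= k - i.
Proof.
case: (leqP k i) => h; first by rewrite cnt_nil.
elim: k h => // k IH h; rewrite cnt_S ?(ltnW h) //.
case: (ltnP i k) => h2.
  have := IH h2; case: (A k) => /=; lia.
have -> : i = k by lia. by rewrite cnt_nil //; case: (A k) => /=; lia.
Qed.

Lemma cnt_shift A A' i i' d :
  (forall m, m < d -> A (i + m) = A' (i' + m)) -> cnt A i (i + d) = cnt A' i' (i' + d).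
Proof.
elim: d => [|d IH] H; first by rewrite !addn0 !cnt_nil.
rewrite !addnS !cnt_S ?leq_addr // IH; last by move=> m hm; apply: H; lia.
by rewrite H.
Qed.

Lemma Per_mul A B p s E j D : Per A B p s E -> s <= j -> j + D * p <= E ->
  A j = A (j + D * p) /\ B j = B (j + D * p).
Proof.
move=> HP hs; elim: D => [|D IH] h; first by rewrite !addn0.
have e : j + D.+1 * p = j + D * p + p by rewrite mulSn; lia.
rewrite e in h *.
have [h1 h2] := IH ltac:(lia).
have [e1 e2] := HP (j + D * p) ltac:(lia) h.
by rewrite h1 h2 e1 e2.
Qed.

Lemma win A B p s E w : Per A B p s E -> s <= w -> w + p <= E ->
  cnt A w (w + p) = cnt A s (s + p).
Proof.
move=> HP; elim: w => [|w IH] h1 h2.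
  by have -> : s = 0 by lia.
case: (ltnP s w.+1) => h3; last by have -> : s = w.+1 by lia.
have h4 : s <= w by lia.
rewrite -IH //; last by lia.
have := cnt_cat A (i:=w) (j:=w.+1) (k:=(w+p).+1) (leqnSn _) ltac:(lia).
rewrite cnt_S ?leq_addr // addSn.
have -> : cnt A w w.+1 = A w by rewrite cnt_S // cnt_nil.
have [-> _] := HP w h4 ltac:(lia).
lia.
Qed.

Lemma wins A B p s E w D : Per A B p s E -> s <= w -> w + D * p <= E ->
  cnt A w (w + D * p) = D * cnt A s (s + p).
Proof.
move=> HP hs; elim: D => [|D IH] h; first by rewrite addn0 cnt_nil.
rewrite (@cnt_cat A w (w + D * p) (w + D.+1 * p)); [|lia|lia].
rewrite IH; last by lia.
have -> : w + D.+1 * p = (w + D * p) + p by rewrite mulSn; lia.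
rewrite (@win A B p s E (w + D * p)) //; lia.
Qed.

Lemma L_fwd_good A B x y p s E i D : Per A B p s E -> s <= i -> i + D * p <= E ->
  x * p <= y * cnt A s (s + p) -> Usem A B x y (i + D * p) -> Usem A B x y i.
Proof.
move=> HP hs hE hg [hB | [k hk]].
  by left; have [_ e] := Per_mul HP hs hE; rewrite e.
right; exists k; move: hk => /and3P [h1 h2 h3]; apply/and3P; split => //; first lia.
rewrite (@cnt_cat A i (i + D * p) k.+1); [|lia|lia].
rewrite (wins HP hs hE).
set c := cnt A s (s + p) in hg *.
set c2 := cnt A (i + D * p) k.+1 in h3 *.
have hm : x * (D * p) <= y * (D * c).
  by rewrite mulnCA [y * _]mulnCA leq_mul2l hg orbT.
have -> : k.+1 - i = D * p + (k.+1 - (i + D * p)) by lia.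
rewrite mulnDr mulnDr. exact: leq_add.
Qed.

Lemma L_back_bad A B x y p s E i D : Per A B p s E -> 0 < p -> s <= i -> i + D * p + p <= E ->
  y * cnt A s (s + p) <= x * p -> Usem A B x y i -> Usem A B x y (i + D * p).
Proof.
move=> HP hp hs hE hb [hB | hk].
  by left; have [_ e] := Per_mul (D:=D) HP hs ltac:(lia); rewrite -e.
right.
set c := cnt A s (s + p) in hb.
have [k hk1 hmin] := ex_minnP hk.
move: (hk1) => /and3P [h1 h2 h3].
case: (leqP (i + D * p) k) => hkD.
  exists k; apply/and3P; split => //.
  move: h3; rewrite (@cnt_cat A i (i + D * p) k.+1); [|lia|lia].
  rewrite (@wins A B p s E i D HP hs ltac:(lia)) -/c.
  have hm : y * (D * c) <= x * (D * p).
    by rewrite mulnCA [x * _]mulnCA leq_mul2l hb orbT.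
  have e1 : k.+1 - i = D * p + (k.+1 - (i + D * p)) by lia.
  rewrite e1 !mulnDr => h3'.
  move: hm h3'; set a1 := y * (D * c); set a2 := x * (D * p).
  set a3 := x * _; set a4 := y * _; lia.
case: (leqP (i + p) k) => hkp.
  exfalso.
  have hw : wit A B x y i (k - p).
    apply/and3P; split; first lia.
    have [_ e] := HP (k.+1 - p) ltac:(lia) ltac:(lia).
    have e' : (k - p).+1 = k.+1 - p by lia.
    rewrite e' e. have -> : k.+1 - p + p = k.+1 by lia. done.
    move: h3; rewrite (@cnt_cat A i (k - p).+1 k.+1); [|lia|lia].
    have -> : k.+1 = (k - p).+1 + p by lia.
    rewrite (win HP) -/c; [|lia|lia].
    have -> : (k - p).+1 + p - i = ((k - p).+1 - i) + p by lia.
    rewrite mulnDr mulnDr; lia.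
  have := hmin _ hw; lia.
exists (k + D * p); apply/and3P; split; first lia.
  have [_ e] := Per_mul (D:=D) HP (j := k.+1) ltac:(lia) ltac:(lia).
  by rewrite -addSn -e.
have -> : (k + D * p).+1 - (i + D * p) = k.+1 - i by lia.
have -> : (k + D * p).+1 = (i + D * p) + (k.+1 - i) by lia.
rewrite -(@cnt_shift A A i); last first.
  move=> m hm; have [e _] := Per_mul (D:=D) HP (j := i + m) ltac:(lia) ltac:(lia).
  by rewrite e; congr A; lia.
by have -> : i + (k.+1 - i) = k.+1 by lia.
Qed.

Lemma L_G A B x y p s E i j : Per A B p s E -> 0 < p -> s <= i -> i <= j -> j <= E ->
  x * p < y * cnt A s (s + p) -> x * (p - 1) * p <= j - i ->
  Usem A B x y j -> Usem A B x y i.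
Proof.
move=> HP hp hs hij hjE hg hd HU.
case: (eqVneq i j) => [-> // | hne].
set c := cnt A s (s + p) in hg.
set a := (j - i) %/ p; set r := (j - i) %% p.
have hdiv : j - i = a * p + r by rewrite /a /r -divn_eq.
have hr : r < p by rewrite /r ltn_pmod.
have ha : x * (p - 1) <= a by rewrite /a leq_divRL.
have hcnt : a * c <= cnt A i j.
  rewrite (@cnt_cat A i (i + a * p) j); [|lia|lia].
  rewrite (@wins A B p s E i a HP hs ltac:(lia)); lia.
have key : x * (j - i) <= y * cnt A i j.
  have h1 : a * (x * p + 1) <= a * (y * c) by rewrite leq_mul2l addn1 hg orbT.
  have h2 : y * (a * c) <= y * cnt A i j by rewrite leq_mul2l hcnt orbT.
  have h3 : x * r <= x * (p - 1) by rewrite leq_mul2l; apply/orP; right; lia.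
  rewrite hdiv mulnDr.
  have e1 : x * (a * p) = a * (x * p) by rewrite mulnCA.
  have e2 : y * (a * c) = a * (y * c) by rewrite mulnCA.
  rewrite e1; rewrite e2 in h2; rewrite mulnDr muln1 in h1; lia.
right; case: HU => [hB | [k /and3P [k1 k2 k3]]].
  exists j.-1; apply/and3P; split; first lia.
    by have -> : j.-1.+1 = j by lia.
  by have -> : j.-1.+1 = j by lia.
exists k; apply/and3P; split => //; first lia.
rewrite (@cnt_cat A i j k.+1); [|lia|lia].
have -> : k.+1 - i = (j - i) + (k.+1 - j) by lia.
rewrite mulnDr mulnDr; exact: leq_add.
Qed.

Lemma L_Bd A B x y p s E i0 j : Per A B p s E -> 0 < p -> s <= i0 -> i0 + p + p <= E ->
  i0 + p <= j -> j <= E ->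
  y * cnt A s (s + p) < x * p -> (y - 1) * (p - 1) * p <= j - (i0 + p) ->
  ~ Usem A B x y i0 -> Usem A B x y (i0 + p) -> Usem A B x y j.
Proof.
move=> HP hp hs hE2 hij hjE hb hd HN HU.
set c := cnt A s (s + p) in hb.
set i1 := i0 + p in hij hd HU.
have hk : exists k, wit A B x y i1 k.
  case: HU => [hB | //]; exfalso; apply: HN; left.
  by have [_ ->] := HP i0 hs ltac:(lia).
have [k hk1 hmin] := ex_minnP hk.
move: (hk1) => /and3P [h1 h2 h3].
case: (ltnP k (i1 + p)) => hk2.
  exfalso; apply: HN; right; exists (k - p); apply/and3P; split; first lia.
    have [_ e] := HP (k.+1 - p) ltac:(lia) ltac:(lia).
    have e' : (k - p).+1 = k.+1 - p by lia.
    rewrite e' e. have -> : k.+1 - p + p = k.+1 by lia. done.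
  have e1 : (k - p).+1 = i0 + (k.+1 - i1) by lia.
  have e2 : k.+1 = i1 + (k.+1 - i1) by lia.
  rewrite e1 (@cnt_shift A A i0 i1); last first.
    move=> m hm; have [e _] := HP (i0 + m) ltac:(lia) ltac:(lia).
    by rewrite e /i1; congr A; lia.
  rewrite -e2.
  have -> : i0 + (k.+1 - i1) - i0 = k.+1 - i1 by lia. done.
case: (ltnP k j) => hkj.
  exfalso.
  have hw : wit A B x y i1 (k - p).
    apply/and3P; split; first lia.
    have [_ e] := HP (k.+1 - p) ltac:(lia) ltac:(lia).
    have e' : (k - p).+1 = k.+1 - p by lia.
    rewrite e' e. have -> : k.+1 - p + p = k.+1 by lia. done.
    move: h3; rewrite (@cnt_cat A i1 (k - p).+1 k.+1); [|lia|lia].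
    have -> : k.+1 = (k - p).+1 + p by lia.
    rewrite (win HP) -/c; [|lia|lia].
    have -> : (k - p).+1 + p - i1 = ((k - p).+1 - i1) + p by lia.
    rewrite mulnDr mulnDr; lia.
  have := hmin _ hw; lia.
right; exists k; apply/and3P; split => //.
set a := (j - i1) %/ p; set r := (j - i1) %% p.
have hdiv : j - i1 = a * p + r by rewrite /a /r -divn_eq.
have hr : r < p by rewrite /r ltn_pmod.
have ha : (y - 1) * (p - 1) <= a by rewrite /a leq_divRL.
have hx : 0 < x by move: hb; case: (x) => //; rewrite mul0n.
have hcnt : cnt A i1 j <= a * c + r.
  rewrite (@cnt_cat A i1 (i1 + a * p) j); [|lia|lia].
  rewrite (@wins A B p s E i1 a HP ltac:(lia) ltac:(lia)).
  have := cnt_le A (i1 + a * p) j; lia.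
have key : y * cnt A i1 j <= x * (j - i1).
  have h4 : y * cnt A i1 j <= y * (a * c + r) by rewrite leq_mul2l hcnt orbT.
  have h5 : a * (y * c + 1) <= a * (x * p) by rewrite leq_mul2l addn1 hb orbT.
  have h6 : (y - 1) * r <= (y - 1) * (p - 1) by rewrite leq_mul2l; apply/orP; right; lia.
  have h7 : y * r <= (y - 1) * r + x * r.
    case: (y); first by rewrite mul0n.
    move=> y'; rewrite subSS subn0 mulSn.
    have : r <= x * r by rewrite leq_pmull.
    lia.
  rewrite hdiv mulnDr.
  have e1 : x * (a * p) = a * (x * p) by rewrite mulnCA.
  have e2 : y * (a * c) = a * (y * c) by rewrite mulnCA.
  rewrite e1; rewrite mulnDr e2 in h4; rewrite mulnDr muln1 in h5; lia.
move: h3; rewrite (@cnt_cat A i1 j k.+1); [|lia|lia].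
have -> : k.+1 - i1 = (j - i1) + (k.+1 - j) by lia.
rewrite mulnDr mulnDr; lia.
Qed.

Definition pb (P : Prop) : bool := if excluded_middle_informative P then true else false.
Lemma pbP (P : Prop) : pb P <-> P.
Proof. by rewrite /pb; case: excluded_middle_informative. Qed.

Lemma bound_aux x y p m o o' : 0 < p -> x < y -> p * y <= m -> o < p -> o' < p ->
  x * (p - 1) * p <= m * p + o - o'.
Proof. move=> hp hxy hm ho ho'. nia. Qed.

Lemma bound_aux2 y p m o o' : 0 < p -> p * y <= m -> o < p -> o' < p ->
  (y - 1) * (p - 1) * p <= m * p + o - o'.
Proof. move=> hp hm ho ho'. nia. Qed.

Lemma decomp s p i : 0 < p -> s <= i ->
  i = s + ((i - s) %/ p) * p + (i - s) %% p /\ (i - s) %% p < p.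
Proof. move=> hp hs; split; last by rewrite ltn_pmod. by rewrite -addnA -divn_eq; lia. Qed.

Lemma core A B x y p s n : 0 < p -> 0 < y -> x <= y -> p * y + 2 <= n ->
  Per A B p s (s + n * p - 1) ->
  exists n1 n2, n = n1 + p * y + n2 /\
    forall i, (s <= i < s + (n1 - 1) * p \/
               s + (n1 + p * y) * p <= i < s + (n1 + p * y + n2 - 2) * p) ->
      (Usem A B x y i <-> Usem A B x y (i + p)).
Proof.
move=> hp hy hxy hn HP.
set E := s + n * p - 1.
set U := Usem A B x y.
pose F r := r <= n - 3 /\ exists o, o < p /\ ~ (U (s + r * p + o) <-> U (s + r.+1 * p + o)).
set c := cnt A s (s + p).
have hc : c <= p by have := cnt_le A s (s + p); rewrite /c; lia.
have hE : forall r o, r <= n - 3 -> o < p -> s + r * p + o + p + p <= E.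
  move=> r o hr ho; rewrite /E.
  have : r * p + p + p <= (n - 1) * p by nia.
  have : (n - 1) * p + p = n * p by nia.
  lia.
have notF : forall i, s <= i -> (i - s) %/ p <= n - 3 -> ~ F ((i - s) %/ p) -> (U i <-> U (i + p)).
  move=> i hs hr hF; have [hi ho] := decomp hp hs.
  apply: NNPP => hne; apply: hF; split => //; exists ((i - s) %% p); split => //.
  by rewrite -hi mulSn; have -> : s + (p + (i - s) %/ p * p) + (i - s) %% p = i + p by lia.
have two : forall r0 r, F r0 -> F r -> r0.+1 + p * y <= r -> False.
  move=> r0 r [hr0 [o' [ho' hf0]]] [hr [o [ho hf]]] hrr.
  have e1 : forall r1 o1, s + r1.+1 * p + o1 = s + r1 * p + o1 + 1 * p by move=> ??; rewrite mulSn mul1n; lia.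
  rewrite e1 in hf0; rewrite e1 in hf.
  have hE0 := hE r0 o' hr0 ho'; have hE1 := hE r o hr ho.
  have hdist : (s + r * p + o) - (s + r0 * p + o' + p) = (r - r0.+1) * p + o - o'.
    rewrite mulnBl mulSn; nia.
  case: (ltngtP (y * c) (x * p)) => hyc.
  -
    have fw : forall i, s <= i -> i + 1 * p + p <= E -> U i -> U (i + 1 * p) :=
      fun i hs hi => L_back_bad (D := 1) HP hp hs hi (ltnW hyc).
    have [n0 u0] : ~ U (s + r0 * p + o') /\ U (s + r0 * p + o' + 1 * p).
      split => [h|]; first by apply: hf0; split => // _; apply: fw => //; lia.
      apply: NNPP => h; apply: hf0; split => // h'; exfalso; apply: h; apply: fw => //; lia.
    have [n1 _] : ~ U (s + r * p + o) /\ U (s + r * p + o + 1 * p).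
      split => [h|]; first by apply: hf; split => // _; apply: fw => //; lia.
      apply: NNPP => h; apply: hf; split => // h'; exfalso; apply: h; apply: fw => //; lia.
    apply: n1; rewrite mul1n in u0.
    apply: (L_Bd HP hp _ _ _ _ hyc _ n0 u0); try lia; try nia.
  -
    have bw : forall i, s <= i -> i + 1 * p <= E -> U (i + 1 * p) -> U i :=
      fun i hs hi => L_fwd_good (D := 1) HP hs hi (ltnW hyc).
    have [u0 n0] : U (s + r0 * p + o') /\ ~ U (s + r0 * p + o' + 1 * p).
      split; last first.
        move=> h; apply: hf0; split => [_|_]; [exact: h | apply: bw => //; lia].
      apply: NNPP => h; apply: hf0; split => [h'|h']; [by exfalso; apply: h | apply: bw => //; lia].
    have [u1 _] : U (s + r * p + o) /\ ~ U (s + r * p + o + 1 * p).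
      split; last first.
        move=> h; apply: hf; split => [_|_]; [exact: h | apply: bw => //; lia].
      apply: NNPP => h; apply: hf; split => [h'|h']; [by exfalso; apply: h | apply: bw => //; lia].
    apply: n0; rewrite mul1n.
    apply: (L_G HP hp _ _ _ hyc _ u1); try lia; try nia.
  -
    apply: hf0; split.
      apply: (L_back_bad (D := 1) HP hp); [lia|lia|by rewrite hyc].
    apply: (L_fwd_good (D := 1) HP); [lia|lia|by rewrite hyc].
case: (classic (exists r, F r)) => [hex | hnone].
  have hex' : exists r, pb (F r) by case: hex => r hr; exists r; apply/pbP.
  have [r0 hr0 hmin] := ex_minnP hex'.
  move/pbP: hr0 => hr0.
  set n1 := minn r0.+1 (n - p * y).
  exists n1, (n - p * y - n1); split; first lia.
  move=> i [h|h].
    have hd : (i - s) %/ p < n1 - 1 by rewrite ltn_divLR //; lia.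
    apply: notF; [lia|lia|] => hF.
    have := hmin _ (proj2 (pbP _) hF); lia.
  have hd1 : n1 + p * y <= (i - s) %/ p by rewrite leq_divRL //; lia.
  have hd2 : (i - s) %/ p < n - 2.
    rewrite ltn_divLR //.
    have : n1 + p * y + (n - p * y - n1) - 2 = n - 2 by lia.
    move=> e; rewrite e in h; lia.
  apply: notF; [lia|lia|] => hF.
  apply: (two r0 _ hr0 hF); lia.
exists 0, (n - p * y); split; first lia.
move=> i [h|h]; first lia.
have hd2 : (i - s) %/ p < n - 2.
  rewrite ltn_divLR //.
  have : 0 + p * y + (n - p * y) - 2 = n - 2 by lia.
  move=> e; rewrite e in h; lia.
apply: notF; [lia|lia|] => hF; apply: hnone; by exists ((i - s) %/ p).
Qed.

Notation apsT AP C K := (seq (seq (astate AP (kS K) C))).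

Lemma startP_S AP C (K : kripke AP) (P : apsT AP C K) k : k < size P ->
  startP P k.+1 = startP P k + size (compP P k).
Proof. by move=> h; rewrite /startP (take_nth [::] h) map_rcons sumn_rcons. Qed.

Lemma startP_ge AP C (K : kripke AP) (P : apsT AP C K) k : size P <= k -> startP P k = lenP P.
Proof. by move=> h; rewrite /startP take_oversize // /lenP size_flatten. Qed.

Lemma startP_mono AP C (K : kripke AP) (P : apsT AP C K) k k' : k <= k' -> startP P k <= startP P k'.
Proof.
move=> h; rewrite -(subnKC h); elim: (k' - k) => [|d IH]; first by rewrite addn0.
rewrite addnS; case: (ltnP (k + d) (size P)) => h2.
  by rewrite startP_S //; apply: leq_trans IH (leq_addr _ _).
by rewrite (@startP_ge _ _ _ P (k + d).+1); [rewrite (@startP_ge _ _ _ P (k + d)) in IH | lia].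

Qed.

Lemma startP_lt AP C (K : kripke AP) (P : apsT AP C K) k k' :
  (forall k, k < size P -> 0 < size (compP P k)) ->
  k < k' -> k < size P -> startP P k < startP P k'.
Proof.
move=> hpos h hk; apply: (@leq_trans (startP P k.+1)); last exact: startP_mono.
by rewrite startP_S //; have := hpos k hk; lia.
Qed.

Lemma startP_lt_inv AP C (K : kripke AP) (P : apsT AP C K) k k' :
  startP P k < startP P k' -> k < k'.
Proof. by move=> h; rewrite ltnNge; apply/negP => /(startP_mono P); lia. Qed.

Lemma startP_le_len AP C (K : kripke AP) (P : apsT AP C K) k : startP P k <= lenP P.
Proof.
case: (leqP (size P) k) => h; first by rewrite startP_ge.
by rewrite -(startP_ge (k:=size P)) //; apply: startP_mono; lia.
Qed.

Lemma inloc_uniq AP C (K : kripke AP) (P : apsT AP C K) k k' l :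
  (forall k, k < size P -> 0 < size (compP P k)) ->
  k < size P -> k' < size P -> inloc P k l -> inloc P k' l -> k = k'.
Proof.
move=> hpos hk hk' /andP [h1 h2] /andP [h3 h4].
case: (ltngtP k k') => // hlt.
  have := startP_mono P hlt; rewrite startP_S //; lia.
have := startP_mono P hlt; rewrite startP_S //; lia.
Qed.

Lemma inloc_ex AP C (K : kripke AP) (P : apsT AP C K) l :
  l < lenP P -> exists k, k < size P /\ inloc P k l.
Proof.
move=> hl.
suff : forall k, k <= size P -> l < startP P k -> exists k', k' < k /\ inloc P k' l.
  move=> H; have [k' [h1 h2]] := H (size P) (leqnn _) ltac:(by rewrite startP_ge).
  by exists k'.
elim => [|k IH] hk hlk; first by rewrite /startP take0 in hlk.
case: (ltnP l (startP P k)) => h.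
  by have [k' [h1 h2]] := IH (ltnW hk) h; exists k'; split => //; lia.
exists k; split => //; apply/andP; split => //; by rewrite -startP_S.
Qed.

Lemma at_loc_nth AP C (K : kripke AP) (P : apsT AP C K) k r :
  k < size P -> r < size (compP P k) ->
  at_loc P (startP P k + r) = nth (dflt C K) (compP P k) r.
Proof.
rewrite /at_loc /compP /startP; elim: P k => [|c P IH] [|k] //= hk hr.
  by rewrite add0n nth_cat hr.
rewrite nth_cat; have -> : (size c + sumn [seq size i | i <- take k P] + r < size c) = false by lia.
have -> : size c + sumn [seq size i | i <- take k P] + r - size c = sumn [seq size i | i <- take k P] + r by lia.
exact: IH.
Qed.

Lemma slice_nth AP C (K : kripke AP) (P : apsT AP C K) k1 k2 i :
  k2 < size P -> i < k2.+1 - k1 -> nth [::] (slice P k1 k2) i = compP P (k1 + i).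
Proof. by move=> h hi; rewrite /slice nth_take // nth_drop. Qed.

Lemma slice_size AP C (K : kripke AP) (P : apsT AP C K) k1 k2 :
  k2 < size P -> size (slice P k1 k2) = k2.+1 - k1.
Proof. by move=> h; rewrite /slice size_take size_drop; case: ltnP => //; lia. Qed.

Lemma periodic_lab AP C (K : kripke AP) (P : apsT AP C K) L k1 k2 c r f :
  periodic L (slice P k1 k2) -> k1 <= c <= k2 -> k2 < size P ->
  size (compP P c) = size (compP P k1) /\
  (r < size (compP P c) -> L f -> lab_P P (startP P c + r) f = lab_P P (startP P k1 + r) f).
Proof.
move=> HP /andP [h1 h2] hk2.
have hs := slice_size k1 hk2.
have [e1 e2] := HP (c - k1) 0 ltac:(lia) ltac:(lia).
rewrite !slice_nth in e1 e2; [|lia|lia|lia|lia].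
rewrite addn0 subnKC // in e1 e2; split => // hr hL.
rewrite /lab_P !at_loc_nth //; try lia.

exact: e2.
Qed.

Definition hpos_def AP C (K : kripke AP) (P : apsT AP C K) :=
  forall k, k < size P -> 0 < size (compP P k).

Lemma run_edge AP C (K : kripke AP) (P : apsT AP C K) s :
  runs P s -> forall i, cs_edge P (s i) (s i.+1).
Proof. by case=> [[_ [th [us [Gs [_ H]]]]] _] i; have [[]] := H i. Qed.

Lemma run0 AP C (K : kripke AP) (P : apsT AP C K) s : runs P s -> s 0 = 0.
Proof. by case=> [[]]. Qed.

Lemma run_lt AP C (K : kripke AP) (P : apsT AP C K) s :
  runs P s -> 0 < lenP P -> forall i, s i < lenP P.
Proof.
move=> hr hl; elim => [|i IH]; first by rewrite (run0 hr).
case: (run_edge hr i) => [[-> h] | [h _]] //; lia.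
Qed.

Lemma run_step AP C (K : kripke AP) (P : apsT AP C K) s :
  runs P s -> forall i, s i.+1 <= (s i).+1.
Proof. by move=> hr i; case: (run_edge hr i) => [[-> h] | [h _]] //; lia. Qed.

Lemma run_le_add AP C (K : kripke AP) (P : apsT AP C K) s :
  runs P s -> forall i m, s (i + m) <= s i + m.
Proof.
move=> hr i; elim => [|m IH]; first by rewrite !addn0.
rewrite addnS; have := run_step hr (i + m); lia.
Qed.

Lemma later_ge AP C (K : kripke AP) (P : apsT AP C K) s c j :
  runs P s -> startP P c <= s j -> forall m, startP P c <= s (j + m).
Proof.
move=> hr hc; elim => [|m IH]; first by rewrite addn0.
rewrite addnS; case: (run_edge hr (j + m)) => [[-> _] | [hlt [k [hk [_ [e1 e2]]]]]]; first lia.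
rewrite -e1; case: (leqP c k) => hck; first exact: startP_mono.
have := startP_mono P hck; rewrite startP_S //; lia.
Qed.

Lemma later_ge' AP C (K : kripke AP) (P : apsT AP C K) s c j j' :
  runs P s -> startP P c <= s j -> j <= j' -> startP P c <= s j'.
Proof. by move=> hr hc hj; rewrite -(subnKC hj); apply: later_ge. Qed.

Lemma seg AP C (K : kripke AP) (P : apsT AP C K) s k1 k2 p c0 t i0 :
  runs P s -> hpos_def P -> k2 < size P ->
  (forall c, k1 <= c <= k2 -> size (compP P c) = p) -> 0 < p ->
  k1 <= c0 <= k2 -> t < p -> s i0 = startP P c0 + t ->
  forall m, s (i0 + m) < startP P k2.+1 ->
  exists c, k1 <= c <= k2 /\ s (i0 + m) = startP P c + (t + m) %% p.
Proof.
move=> hr hpos hk2 hsz hp hc0 ht hs0; elim => [|m IH].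
  by move=> _; exists c0; rewrite !addn0 modn_small.
rewrite addnS => hb.
have hb' : s (i0 + m) < startP P k2.+1.
  case: (run_edge hr (i0 + m)) => [[e _] | [hlt [k [hk [_ [e1 e2]]]]]]; first lia.
  have hkk : k < k2.+1 by apply: (@startP_lt_inv _ _ _ P); rewrite e1.
  have := startP_mono P hkk; rewrite startP_S //; lia.
have [c [hc e]] := IH hb'.
have hcs : c < size P by lia.
have hr' : (t + m) %% p < p by rewrite ltn_pmod.
have hmod : (t + m.+1) %% p = ((t + m) %% p).+1 %% p by rewrite addnS -[in RHS]addn1 modnDml addn1.
case: (run_edge hr (i0 + m)) => [[e' _] | [hlt [k [hk [hloop [e1 e2]]]]]].
  rewrite e' e hmod.
  case: (ltnP ((t + m) %% p).+1 p) => h.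
    by exists c; rewrite (modn_small h); split => //; lia.
  have hp' : ((t + m) %% p).+1 = p by lia.
  have hS : startP P c.+1 = startP P c + p by rewrite startP_S // hsz.
  exists c.+1; rewrite hp' modnn hS; split; last by lia.
  have : startP P c.+1 < startP P k2.+1 by rewrite hS; lia.
  move/(@startP_lt_inv _ _ _ P); lia.
have hkc : k = c.
  apply: (inloc_uniq (l := s (i0 + m)) hpos hk hcs); apply/andP; split; try lia.
  by rewrite hsz //; lia.
subst k; rewrite hsz // in e2.
have hp' : ((t + m) %% p).+1 = p by lia.
by exists c; split => //; rewrite hmod hp' modnn addn0 -e1.
Qed.

Definition labf AP C (K : kripke AP) (P : apsT AP C K) (s : nat -> nat) f : nat -> bool :=
  fun j => lab_P P (s j) f.

Lemma fsat_until AP C (K : kripke AP) (P : apsT AP C K) s a x y b i :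
  (forall j, fsat (stP P s) a j <-> labf P s a j) ->
  (forall j, fsat (stP P s) b j <-> labf P s b j) ->
  fsat (stP P s) (FUntil a x y b) i <-> Usem (labf P s a) (labf P s b) x y i.
Proof.
move=> Ha Hb /=; split.
  case=> [h | [k [hik [hb [c [hc hx]]]]]]; first by left; apply/Hb.
  right; exists k; apply/and3P; split => //; first by apply/Hb.
  have -> : k.+1 - i = k - i + 1 by lia.
  suff <- : \sum_(i <= j < k.+1) c j = cnt (labf P s a) i k.+1 by [].
  rewrite /cnt; apply: eq_big_nat => j hj; congr nat_of_bool.
  have h1 := hc j ltac:(lia); have h2 := Ha j.
  by apply/idP/idP => h; [apply/h2; apply/h1 | apply/h1; apply/h2].
case=> [h | [k /and3P [hik hb hx]]]; first by left; apply/Hb.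
right; exists k; split => //; split; first by apply/Hb.
exists (labf P s a); split; first by move=> j hj; rewrite Ha.
by have -> : k - i + 1 = k.+1 - i by lia.
Qed.

Lemma sum_nth_count T (x0 : T) (f : pred T) (u : seq T) :
  \sum_(0 <= m < size u) (f (nth x0 u m) : nat) = count f u.
Proof.
elim: u => [|z u IH]; first by rewrite big_geq.
by rewrite /= big_nat_recl //= IH.
Qed.

Lemma cnt_comp AP C (K : kripke AP) (P : apsT AP C K) (A : nat -> bool) a k w :
  k < size P ->
  (forall m, m < size (compP P k) -> A (w + m) = lab_P P (startP P k + m) a) ->
  cnt A w (w + size (compP P k)) = cnt_lab a (compP P k).
Proof.
move=> hk H; rewrite /cnt_lab -(sum_nth_count (dflt C K)).
rewrite /cnt -{1}[w]add0n big_addn addKn.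
apply: eq_big_nat => m hm; rewrite addnC H; last lia.
by rewrite /lab_P at_loc_nth //; lia.
Qed.

Lemma Usem_ext A B A' B' x y i i' :
  (forall m, A (i + m) = A' (i' + m) /\ B (i + m) = B' (i' + m)) ->
  Usem A B x y i -> Usem A' B' x y i'.
Proof.
move=> H [hb | [k /and3P [h1 h2 h3]]].
  by left; have [_ e] := H 0; rewrite !addn0 in e; rewrite -e.
right; exists (i' + (k - i)); apply/and3P; split; first lia.
  have [_ e] := H (k - i).+1; rewrite -addnS -e.
  by have -> : i + (k - i).+1 = k.+1 by lia.
have -> : (i' + (k - i)).+1 - i' = k.+1 - i by lia.
have -> : (i' + (k - i)).+1 = i' + (k.+1 - i) by lia.
rewrite -(@cnt_shift A A' i i'); last by move=> m _; have [] := H m.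
by have -> : i + (k.+1 - i) = k.+1 by lia.
Qed.

Lemma mod_eq_self t d p : 0 < p -> t < p -> (t + d) %% p = t -> d %% p = 0.
Proof.
move=> hp ht; rewrite -modnDmr; set e := d %% p.
have he : e < p by rewrite ltn_pmod.
case: (ltnP (t + e) p) => h; first by rewrite modn_small //; lia.
have -> : t + e = (t + e - p) + p by lia.
by rewrite modnDr modn_small; lia.
Qed.

Lemma periodic_size AP C (K : kripke AP) (P : apsT AP C K) L k1 k2 c :
  periodic L (slice P k1 k2) -> k1 <= c <= k2 -> k2 < size P ->
  size (compP P c) = size (compP P k1).
Proof.
move=> HP /andP [h1 h2] hk2.
have hs := slice_size k1 hk2.
have [e1 _] := HP (c - k1) 0 ltac:(lia) ltac:(lia).
rewrite !slice_nth in e1; try lia.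
by rewrite addn0 subnKC // in e1.
Qed.

Lemma pat_lab AP C (K : kripke AP) (P : apsT AP C K) s L k1 kt t i1 f :
  runs P s -> hpos_def P -> periodic L (slice P k1 kt) -> kt < size P -> k1 <= kt ->
  t < size (compP P k1) -> s i1 = startP P k1 + t -> L f ->
  forall m, s (i1 + m) < startP P kt.+1 ->
  lab_P P (s (i1 + m)) f = lab_P P (startP P k1 + (t + m) %% size (compP P k1)) f.
Proof.
move=> hr hpos HP hkt hk1 ht hs hL m hb.
set p := size (compP P k1).
have hsz : forall c, k1 <= c <= kt -> size (compP P c) = p.
  by move=> c hc; have [] := periodic_lab 0 f HP hc hkt.
have [c [hc e]] := seg hr hpos hkt hsz ltac:(lia) (c0 := k1) ltac:(lia) ht hs hb.
rewrite e; have [h1 h2] := periodic_lab ((t + m) %% p) f HP hc hkt.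
by apply: h2 => //; rewrite h1 ltn_pmod //; lia.
Qed.

Lemma offset_of AP C (K : kripke AP) (P : apsT AP C K) s L k1 kt t i1 m c2 t2 :
  runs P s -> hpos_def P -> periodic L (slice P k1 kt) -> kt < size P -> k1 <= kt ->
  t < size (compP P k1) -> s i1 = startP P k1 + t ->
  k1 <= c2 <= kt -> t2 < size (compP P k1) -> s (i1 + m) = startP P c2 + t2 ->
  s (i1 + m) < startP P kt.+1 ->
  (t + m) %% size (compP P k1) = t2.
Proof.
move=> hr hpos HP hkt hk1 ht hs hc2 ht2 e2 hb.
set p := size (compP P k1).
have hsz : forall c, k1 <= c <= kt -> size (compP P c) = p.
  by move=> c hc; apply: periodic_size HP hc hkt.
have [c [hc e]] := seg hr hpos hkt hsz ltac:(lia) (c0 := k1) ltac:(lia) ht hs hb.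
have hcs : c < size P by lia.
have hc2s : c2 < size P by lia.
have hpc : (t + m) %% p < p by rewrite ltn_pmod //; lia.
have ec : c = c2.
  apply: (inloc_uniq (l := s (i1 + m)) hpos hcs hc2s); apply/andP; split; rewrite ?hsz //; lia.
subst c2; lia.
Qed.

Lemma dhelper AP C (K : kripke AP) (P : apsT AP C K) s L a b k1 k2 t i1 i2 :
  runs P s -> hpos_def P -> periodic L (slice P k1 k2.+1) -> k2.+1 < size P -> k1 < k2 ->
  t < size (compP P k1) -> s i1 = startP P k1 + t -> s i2 = startP P k2 + t -> i1 < i2 ->
  L a -> L b ->
  exists D, i2 = i1 + D * size (compP P k1) /\ 0 < D /\
    Per (labf P s a) (labf P s b) (size (compP P k1)) i1 (i2 + size (compP P k1)) /\
    cnt (labf P s a) i1 (i1 + size (compP P k1)) = cnt_lab a (compP P k1) /\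
    cnt_lab a (compP P k2) = cnt_lab a (compP P k1) /\
    size (compP P k2) = size (compP P k1).
Proof.
move=> hr hpos HP hk2 hk12 ht hs1 hs2 hi La Lb.
set p := size (compP P k1).
have hp : 0 < p by lia.
have hsz : forall c, k1 <= c <= k2.+1 -> size (compP P c) = p.
  by move=> c hc; apply: periodic_size HP hc hk2.
have eS1 : startP P k2.+1 = startP P k2 + p by rewrite startP_S ?hsz //; lia.
have eS2 : startP P k2.+2 = startP P k2 + p + p.
  rewrite (@startP_S _ _ _ P k2.+1) // eS1 (hsz k2.+1) //; lia.
have bnd : forall m, m <= i2 - i1 + p -> s (i1 + m) < startP P k2.+2.
  move=> m hm; case: (leqP (i1 + m) i2) => h.
    case: (ltnP (s (i1 + m)) (startP P k2.+1)) => h2.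
      by apply: (leq_trans h2); apply: startP_mono.
    have := later_ge' hr h2 h; lia.
  have := run_le_add hr i2 (i1 + m - i2); have -> : i2 + (i1 + m - i2) = i1 + m by lia.
  lia.
have off : (t + (i2 - i1)) %% p = t.
  apply: (offset_of (c2 := k2) hr hpos HP hk2 _ ht hs1); try lia.
    by have -> : i1 + (i2 - i1) = i2 by lia.
  have -> : i1 + (i2 - i1) = i2 by lia.
  rewrite hs2 eS2; lia.
have hmod := mod_eq_self hp ht off.
set D := (i2 - i1) %/ p.
have eD : i2 = i1 + D * p by rewrite /D; have := divn_eq (i2 - i1) p; rewrite hmod addn0; lia.
have hD : 0 < D by case: (posnP D) => // h; rewrite h mul0n addn0 in eD; lia.
clearbody D.
have hDp : p <= D * p by rewrite leq_pmull.
have pat : forall f, L f -> forall m, m <= i2 - i1 + p ->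
    labf P s f (i1 + m) = lab_P P (startP P k1 + (t + m) %% p) f.
  move=> f hf m hm; rewrite /labf.
  by apply: (pat_lab (kt := k2.+1) hr hpos HP hk2 _ ht hs1 hf); [lia | apply: bnd].
exists D; split => //; split => //.
have HPer : Per (labf P s a) (labf P s b) p i1 (i2 + p).
  move=> j hj hjp.
  have e1 : j = i1 + (j - i1) by lia.
  have e2 : j + p = i1 + (j - i1 + p) by lia.
  have q : forall f, L f -> labf P s f j = labf P s f (j + p).
    move=> f hf; rewrite e2 [in LHS]e1 !pat //; try lia.
    have -> : t + (j - i1 + p) = (t + (j - i1)) + p by lia.
    by rewrite modnDr.
  by split; apply: q.
split => //.
set w := i2 - t.
have hw : i1 <= w by rewrite /w eD; nia.
have Aw : forall m, m < p -> labf P s a (w + m) = lab_P P (startP P k1 + m) a.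
  move=> m hm; have e : w + m = i1 + (w + m - i1) by lia.
  rewrite e pat //; last by rewrite /w; lia.
  have -> : t + (w + m - i1) = D * p + m by rewrite /w; lia.
  by rewrite modnMDl modn_small.
have c1 : cnt (labf P s a) w (w + p) = cnt_lab a (compP P k1).
  by apply: cnt_comp; [lia | exact: Aw].
have c2 : cnt (labf P s a) w (w + size (compP P k2)) = cnt_lab a (compP P k2).
  apply: cnt_comp; first lia.
  move=> m hm; rewrite Aw; last by rewrite hsz in hm; lia.
  have [_ h] := periodic_lab m a HP (c := k2) ltac:(lia) hk2.
  by rewrite h.
rewrite hsz in c2; last lia.
split; first by rewrite -c1 (win HPer hw) //; lia.
by split; [rewrite -c2 c1 | apply: hsz; lia].
Qed.

Lemma dlast AP C (K : kripke AP) (P : apsT AP C K) s L k1 kt t i1 i2 f :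
  runs P s -> hpos_def P -> periodic L (slice P k1 kt) -> kt < size P -> k1 <= kt ->
  (forall j, s j < startP P kt.+1) ->
  t < size (compP P k1) -> s i1 = startP P k1 + t -> s i2 = startP P kt + t -> i1 <= i2 ->
  L f -> forall m, labf P s f (i1 + m) = labf P s f (i2 + m).
Proof.
move=> hr hpos HP hkt hk1 hall ht hs1 hs2 hi hf m.
set p := size (compP P k1).
have off : (t + (i2 - i1)) %% p = t.
  apply: (offset_of (c2 := kt) hr hpos HP hkt _ ht hs1); try lia.
  by have -> : i1 + (i2 - i1) = i2 by lia.
  exact: hall.
have e : i2 + m = i1 + (i2 - i1 + m) by lia.
rewrite /labf /= e !(pat_lab hr hpos HP hkt hk1 ht hs1 hf) //.
by rewrite -/p addnA -[in RHS]modnDml off.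
Qed.

Import GRing.Theory Num.Theory.

Lemma visit AP C (K : kripke AP) (P : apsT AP C K) s l :
  runs P s -> l < lenP P -> exists i, s i = l.
Proof. by case=> _ H; apply: H. Qed.

Lemma run_counter AP C (K : kripke AP) (P : apsT AP C K) s :
  runs P s -> exists th : nat -> C -> int, th 0 = (fun _ => 0%R) /\
    forall i, th i.+1 = (fun c => th i c + a_u (at_loc P (s i)) c)%R /\
      forall g, g \in a_g (at_loc P (s i.+1)) -> guard_holds g (th i.+1).
Proof.
case=> [[_ [th [us [Gs [h0 H]]]]] _]; exists th; split => // i.
have [[_ [eu eG]] [e g]] := H i; split; first by rewrite e eu.
by move=> gg; rewrite -eG; apply: g.
Qed.

Lemma typeL AP C (K : kripke AP) (P : apsT AP C K) k l :
  k < size P -> is_loop (compP P k) -> inloc P k l -> a_t (at_loc P l) = TypL.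
Proof.
move=> hk [_ [hall _]] /andP [h1 h2].
have -> : l = startP P k + (l - startP P k) by lia.
rewrite at_loc_nth //; last lia.
have := (all_nthP (dflt C K) hall) (l - startP P k) ltac:(lia).
by rewrite /isL; case: a_t.
Qed.

Lemma typeR AP C (K : kripke AP) (P : apsT AP C K) k l :
  k < size P -> is_row (compP P k) -> inloc P k l -> a_t (at_loc P l) = TypR.
Proof.
move=> hk [_ [hall _]] /andP [h1 h2].
have -> : l = startP P k + (l - startP P k) by lia.
rewrite at_loc_nth //; last lia.
have := (all_nthP (dflt C K) hall) (l - startP P k) ltac:(lia).
by rewrite /isR; case: a_t.
Qed.

Lemma mono_row AP C (K : kripke AP) (P : apsT AP C K) s j :
  runs P s -> a_t (at_loc P (s j)) = TypR -> forall m, s j < s (j + m.+1).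
Proof.
move=> hr hR; elim => [|m IH].
  rewrite addn1; case: (run_edge hr j) => [[-> _] | [hlt [k [hk [hl [e1 e2]]]]]]; first lia.
  have := typeL hk hl (l := s j); rewrite hR => h; have : TypR = TypL by apply: h; apply/andP; lia.
  by [].
rewrite addnS; case: (run_edge hr (j + m.+1)) => [[-> _] | [hlt [k [hk [hl [e1 e2]]]]]]; first lia.
rewrite -e1; case: (ltnP (s j) (startP P k)) => // h.
have := typeL hk hl (l := s j); rewrite hR => H; have : TypR = TypL by apply: H; apply/andP; lia.
by [].
Qed.

Definition comp_ok AP C (K : kripke AP) (P : apsT AP C K) :=
  forall k, k < size P -> is_row (compP P k) \/ is_loop (compP P k).

Lemma before_row AP C (K : kripke AP) (P : apsT AP C K) s i j :
  runs P s -> comp_ok P -> 0 < lenP P -> a_t (at_loc P (s i)) = TypR -> j < i -> s j < s i.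
Proof.
move=> hr hc hl hR hji; rewrite ltnNge; apply/negP => hge.
have hi : i = j + (i - j.+1).+1 by lia.
case: (ltngtP (s j) (s i)) => h; first lia.
  have [k [hk hin]] := inloc_ex (run_lt hr hl i).
  case: (ltnP (s j) (startP P k.+1)) => h2.
    have hinj : inloc P k (s j) by move: hin => /andP [h3 h4]; apply/andP; rewrite -startP_S; lia.
    case: (hc k hk) => hrow.
      have := mono_row hr (typeR hk hrow hinj) (i - j.+1); rewrite -hi; lia.
    by rewrite (typeL hk hrow hin) in hR.
  have := later_ge' hr h2 (ltnW hji); move: hin => /andP [h3 h4]; rewrite startP_S //; lia.
have H := @mono_row _ _ _ P s j hr; rewrite h in H; have := H hR (i - j.+1); rewrite -hi; lia.
Qed.

Lemma case_c AP C (K : kripke AP) (P : apsT AP C K) s a x y b l (c : C) i :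
  runs P s -> comp_ok P -> 0 < lenP P -> s i = l -> a_t (at_loc P l) = TypR ->
  (forall j, fsat (stP P s) b j <-> labf P s b j) ->
  (forall l', l' < l -> a_u (at_loc P l') c = 0%R) ->
  (forall l', l <= l' < lenP P -> lab_P P l' a -> a_u (at_loc P l') c = (y%:Z - x%:Z)%R) ->
  (forall l', l <= l' < lenP P -> ~~ lab_P P l' a -> a_u (at_loc P l') c = (- x%:Z)%R) ->
  (~~ lab_P P l (FUntil a x y b) ->
     ~~ lab_P P l b /\
     forall l', l < l' < lenP P -> lab_P P l' b -> (c, false) \in a_g (at_loc P l')) ->
  (lab_P P l (FUntil a x y b) ->
     exists l', l < l' < lenP P /\ lab_P P l' b /\ (c, true) \in a_g (at_loc P l')) ->
  (Usem (labf P s a) (labf P s b) x y i <-> lab_P P l (FUntil a x y b)).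
Proof.
move=> hr hc hl hsi hR Hb h0 hya hxa hneg hpos.
have [th [th0 thS]] := run_counter hr.
rewrite -hsi in hR.
have hbef : forall j, j < i -> s j < l by move=> j hj; rewrite -hsi; apply: (before_row hr hc hl hR hj).
have hz : forall j, j <= i -> th j c = 0%R.
  elim => [|j IH] hj; first by rewrite th0.
  have [-> _] := thS j; rewrite IH; last lia.
  by rewrite h0 ?addr0 //; apply: hbef.
have hge : forall d, l <= s (i + d).
  case => [|d]; first by rewrite addn0 hsi.
  by have := mono_row hr hR d; lia.
have hd : forall d, th (i + d) c = ((y * cnt (labf P s a) i (i + d))%:Z - (x * d)%:Z)%R.
  elim => [|d IH]; first by rewrite addn0 hz // cnt_nil // !muln0 subr0.
  rewrite addnS; have [-> _] := thS (i + d); rewrite /= IH cnt_S ?leq_addr //.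
  have hlt := run_lt hr hl (i + d).
  case hA : (labf P s a (i + d)).
    rewrite hya; [|by have := hge d; lia|exact: hA].
    rewrite /= addn1 mulnS !PoszD mulnSr PoszD; lia.
  rewrite hxa; [|by have := hge d; lia|by rewrite /labf in hA; rewrite hA].
  rewrite /= addn0 mulnSr PoszD; lia.
case hL : (lab_P P l (FUntil a x y b)); split => // H.
  have [l' [hl' [hlb hg]]] := hpos hL.
  have [j' hj'] := visit hr (proj2 (andP hl')).
  have hij : i < j'.
    case: (ltngtP i j') => // h; first by have := hbef _ h; lia.
    by rewrite -h hsi in hj'; lia.
  right; exists j'.-1; apply/and3P; split; first lia.
    by rewrite prednK ?/labf ?hj' //; lia.
  have hg' : (c, true) \in a_g (at_loc P (s j'.-1.+1)) by rewrite prednK ?hj' //; lia.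
  have := (proj2 (thS j'.-1)) _ hg'.
  rewrite /guard_holds /= prednK; last lia.
  have -> : j' = i + (j' - i) by lia.
  rewrite hd subr_ge0 lez_nat.
  by have -> : i + (j' - i) - i = j' - i by lia.
exfalso; have [hnb hall] := hneg (negbT hL).
case: H => [hB | [k /and3P [h1 h2 h3]]].
  by rewrite /labf hsi in hB; rewrite hB in hnb.
have hk1 : l < s k.+1.
  have := mono_row hr hR (k - i); have -> : i + (k - i).+1 = k.+1 by lia. by rewrite hsi.
have := (proj2 (thS k)) _ (hall (s k.+1) ltac:(have := run_lt hr hl k.+1; lia) h2).
rewrite /guard_holds /=.
have -> : k.+1 = i + (k.+1 - i) by lia.
rewrite hd.
have -> : i + (k.+1 - i) = k.+1 by lia.
rewrite subr_lt0 ltz_nat; lia.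
Qed.

Lemma periodic_single AP C (K : kripke AP) (P : apsT AP C K) L k :
  k < size P -> periodic L (slice P k k).
Proof.
move=> hk i j; rewrite slice_size // subSnn => hi hj.
have -> : i = 0 by lia. have -> : j = 0 by lia. done.
Qed.

Lemma case_b AP C (K : kripke AP) (P : apsT AP C K) s a x y b i :
  runs P s -> hpos_def P -> 0 < size P ->
  good a x y (compP P (lastc P)) -> (exists l', inloc P (lastc P) l' /\ lab_P P l' b) ->
  Usem (labf P s a) (labf P s b) x y i.
Proof.
move=> hr hpos hsz hg [l' [hin hlb]].
set k := lastc P.
have hk : k < size P by rewrite /k /lastc; lia.
have hkS : startP P k.+1 = lenP P by rewrite startP_ge // /k /lastc; lia.
set p := size (compP P k).
have hp : 0 < p by apply: hpos.
have hS : startP P k.+1 = startP P k + p by rewrite startP_S.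
set t' := l' - startP P k.
have hin' : startP P k <= l' < startP P k + p by exact: hin.
have ht' : t' < p by move: hin' => /andP [h1 h2]; rewrite /t'; lia.
have hl : 0 < lenP P by lia.
have hlt0 : startP P k < lenP P by lia.
have [j0 hj0] := visit hr hlt0.
have HPs := @periodic_single _ _ _ P (fun _ => True) k hk.
have pat : forall f m, labf P s f (j0 + m) = lab_P P (startP P k + m %% p) f.
  move=> f m; rewrite /labf (pat_lab hr hpos HPs hk (leqnn k) hp (t := 0)) ?addn0 //.
  by rewrite hkS; apply: run_lt.
have HPer : forall E, Per (labf P s a) (labf P s b) p j0 E.
  move=> E j hj _; have e1 : j = j0 + (j - j0) by lia.
  have e2 : j + p = j0 + (j - j0 + p) by lia.
  by rewrite e2 {1 3}e1 !pat modnDr.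
have hc : cnt (labf P s a) j0 (j0 + p) = cnt_lab a (compP P k).
  apply: cnt_comp => // m hm; by rewrite pat modn_small.
set c := cnt (labf P s a) j0 (j0 + p) in hc.
have hgc : x * p < y * c by rewrite hc.
set j1 := j0 + i * p.
set M := x * (j1 - i) + x * p + 1.
set T := j1 + M * p + t'.
have hip : i <= i * p by rewrite leq_pmulr.
have hM1 : 0 < M by rewrite /M addn1.
have hMp : M <= M * p by rewrite leq_pmulr.
right; exists T.-1; apply/and3P; split; first by rewrite /T /j1; lia.
  rewrite prednK; last by rewrite /T; lia.
  have -> : T = j0 + ((i + M) * p + t') by rewrite /T /j1 mulnDl; lia.
  by rewrite pat modnMDl modn_small // /t' addnC subnK //; move: hin' => /andP [].
rewrite prednK; last by rewrite /T; lia.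
have hcnt : M * c <= cnt (labf P s a) i T.
  rewrite (@cnt_cat _ i j1 T); [|rewrite /j1; lia|rewrite /T; lia].
  rewrite (@cnt_cat _ j1 (j1 + M * p) T); [|lia|rewrite /T; lia].
  rewrite (wins (HPer (T + p)) (w := j1) (D := M)); [lia|rewrite /j1; lia|rewrite /T; lia].
have h1 : M * (x * p + 1) <= M * (y * c) by rewrite leq_mul2l addn1 hgc orbT.
have h2 : y * (M * c) <= y * cnt (labf P s a) i T by rewrite leq_mul2l hcnt orbT.
have h3 : x * t' <= x * p by rewrite leq_mul2l; apply/orP; right; lia.
have eT : T - i = (j1 - i) + M * p + t' by rewrite /T /j1; lia.
rewrite eT !mulnDr.
have e4 : x * (M * p) = M * (x * p) by rewrite mulnCA.
have e5 : y * (M * c) = M * (y * c) by rewrite mulnCA.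
rewrite e4; rewrite e5 in h2; rewrite mulnDr muln1 in h1.
have hMdef : M = x * (j1 - i) + x * p + 1 by [].
clearbody M; lia.
Qed.

Lemma case_d AP C (K : kripke AP) (P : apsT AP C K) s a x y b k l k' i :
  runs P s -> hpos_def P -> 0 < size P ->
  k < size P -> inloc P k l -> s i = l -> k' < size P ->
  (forall l', inloc P k' l' -> forall i', s i' = l' ->
     (Usem (labf P s a) (labf P s b) x y i' <-> lab_P P l' (FUntil a x y b))) ->
  (k = lastc P -> k' < k /\
     periodic (fun f => f = a \/ f = b \/ f = FUntil a x y b) (slice P k' k)) ->
  (k <> lastc P ->
     (good a x y (compP P k) \/ neutral a x y (compP P k)) /\ ~~ lab_P P l (FUntil a x y b)
     \/ bad a x y (compP P k) /\ lab_P P l (FUntil a x y b) ->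
     k' < k /\ periodic (fun f => f = a \/ f = b \/ f = FUntil a x y b) (slice P k' k.+1)) ->
  (k <> lastc P ->
     (good a x y (compP P k) \/ neutral a x y (compP P k)) /\ lab_P P l (FUntil a x y b)
     \/ bad a x y (compP P k) /\ ~~ lab_P P l (FUntil a x y b) ->
     k < k' /\ k' <> lastc P /\
     periodic (fun f => f = a \/ f = b \/ f = FUntil a x y b) (slice P k k'.+1)) ->
  (Usem (labf P s a) (labf P s b) x y i <-> lab_P P l (FUntil a x y b)).
Proof.
move=> hr hpos hsz hk hin hsi hk' IH H1 H2 H3.
set L := (fun f => f = a \/ f = b \/ f = FUntil a x y b).
have La : L a by left. have Lb : L b by right; left.
have LU : L (FUntil a x y b) by right; right.
set t := l - startP P k; set p := size (compP P k).
have hin' : startP P k <= l < startP P k + p by exact: hin.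
have ht : t < p by rewrite /t; lia.
have hl : l = startP P k + t by rewrite /t; lia.
have hSk : startP P k.+1 = startP P k + p by rewrite startP_S.
have hl0 : 0 < lenP P by have := startP_le_len P k.+1; rewrite hSk; lia.
have vis : size (compP P k') = p -> exists i', s i' = startP P k' + t.
  move=> e; apply: (visit hr).
  have := startP_le_len P k'.+1; rewrite startP_S // e; lia.
have before : k' < k -> t < size (compP P k') -> forall i', s i' = startP P k' + t -> i' < i.
  move=> hkk htk i' hi'; rewrite ltnNge; apply/negP => hii.
  have h1 : startP P k <= s i by rewrite hsi; lia.
  have := later_ge' hr h1 hii; rewrite hi'.
  have := startP_mono P hkk; rewrite startP_S //; lia.
have after : k < k' -> forall i', s i' = startP P k' + t -> i < i'.
  move=> hkk i' hi'; rewrite ltnNge; apply/negP => hii.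
  have h1 : startP P k' <= s i' by rewrite hi'; lia.
  have := later_ge' hr h1 hii; rewrite hsi.
  have := startP_mono P hkk; rewrite hSk; lia.
have labk : forall k1 k2 c, periodic L (slice P k1 k2) -> k1 <= c <= k2 -> k2 < size P ->
    t < size (compP P c) ->
    lab_P P (startP P c + t) (FUntil a x y b) = lab_P P (startP P k1 + t) (FUntil a x y b).
  by move=> k1 k2 c HP hc hk2 htc; have [_ h] := periodic_lab t (FUntil a x y b) HP hc hk2; apply: h.
case: (eqVneq k (lastc P)) => hkl.
  have [hkk HP] := H1 hkl.
  have e' : size (compP P k) = size (compP P k') by apply: periodic_size HP _ hk; lia.
  have [i' hi'] := vis (esym e').
  have hii := before hkk ltac:(rewrite -e'; lia) i' hi'.
  have hall : forall j, s j < startP P k.+1.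
    by move=> j; rewrite startP_ge; [apply: run_lt | rewrite hkl /lastc; lia].
  have htk : t < size (compP P k') by lia.
  have eq : forall f, L f -> forall m, labf P s f (i' + m) = labf P s f (i + m).
    by move=> f hf; apply: (dlast hr hpos HP hk (ltnW hkk) hall htk hi' (etrans hsi hl) (ltnW hii) hf).
  have -> : lab_P P l (FUntil a x y b) = lab_P P (startP P k' + t) (FUntil a x y b).
    by rewrite hl (labk k' k k HP) //; lia.
  rewrite -(IH _ _ i' hi'); last by rewrite /inloc; lia.
  split; apply: Usem_ext => m; [rewrite !eq // | rewrite !eq //].
have hkS : k.+1 < size P by move: hkl; rewrite /lastc; lia.
have hkn : k <> lastc P by apply/eqP.
set ck := cnt_lab a (compP P k).
have hgood_of : x * p <= y * ck -> good a x y (compP P k) \/ neutral a x y (compP P k).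
  rewrite /good /neutral /p /ck => h.
  case: (ltngtP (x * size (compP P k)) (y * cnt_lab a (compP P k))) => h2; [by left | lia | by right].
case: (leqP (x * p) (y * ck)) => hgn; case hL : (lab_P P l (FUntil a x y b)).
-
  have hgood := hgood_of hgn.
  have [hkk [hkl' HP]] := H3 hkn (or_introl (conj hgood hL)).
  have e' : size (compP P k') = p by rewrite (periodic_size HP (c := k')) //; [lia|move: hkl'; rewrite /lastc; lia].
  have [i' hi'] := vis e'.
  have hii := after hkk i' hi'.
  have [D [eD [hD [HPer [hc _]]]]] := dhelper hr hpos HP ltac:(move: hkl'; rewrite /lastc; lia) hkk ht (etrans hsi hl) hi' hii La Lb.
  split => // _.
  apply: (L_fwd_good (D := D) HPer (leqnn i)); first lia.
    by rewrite -/p hc.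
  rewrite -eD (IH _ _ i' hi'); last by rewrite /inloc e'; lia.
  rewrite (labk k k'.+1 k') //; try (by rewrite -hl hL); try lia;
    try (by move: hkl'; rewrite /lastc; lia); by rewrite e'.
-
  have hgood := hgood_of hgn.
  have [hkk HP] := H2 hkn (or_introl (conj hgood (negbT hL))).
  have e' : size (compP P k) = size (compP P k') by apply: periodic_size HP _ hkS; lia.
  have [i' hi'] := vis (esym e').
  have hii := before hkk ltac:(rewrite -e'; lia) i' hi'.
  have htk : t < size (compP P k') by lia.
  have [D [eD [hD [HPer [hc [hc2 _]]]]]] := dhelper hr hpos HP hkS hkk htk hi' (etrans hsi hl) hii La Lb.
  split => // HU; exfalso.
  have HU' := L_fwd_good (D := D) HPer (leqnn i') ltac:(lia) ltac:(rewrite hc -hc2 -e'; exact: hgn) (ltac:(rewrite -eD; exact: HU)).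
  move: HU'; rewrite (IH _ _ i' hi'); last by rewrite /inloc; lia.
  rewrite -(labk k' k.+1 k) //; try (by rewrite -hl hL); lia.
-
  have [hkk HP] := H2 hkn (or_intror (conj hgn hL)).
  have e' : size (compP P k) = size (compP P k') by apply: periodic_size HP _ hkS; lia.
  have [i' hi'] := vis (esym e').
  have hii := before hkk ltac:(rewrite -e'; lia) i' hi'.
  have htk : t < size (compP P k') by lia.
  have [D [eD [hD [HPer [hc [hc2 _]]]]]] := dhelper hr hpos HP hkS hkk htk hi' (etrans hsi hl) hii La Lb.
  split => // _; rewrite eD.
  apply: (L_back_bad (D := D) HPer _ (leqnn i')); [lia | lia | rewrite hc -hc2 -e'; exact: ltnW hgn |].
  rewrite (IH _ _ i' hi'); last by rewrite /inloc; lia.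
  rewrite -(labk k' k.+1 k) //; try (by rewrite -hl hL); lia.
-
  have [hkk [hkl' HP]] := H3 hkn (or_intror (conj hgn (negbT hL))).
  have e' : size (compP P k') = p by rewrite (periodic_size HP (c := k')) //; [lia|move: hkl'; rewrite /lastc; lia].
  have [i' hi'] := vis e'.
  have hii := after hkk i' hi'.
  have [D [eD [hD [HPer [hc _]]]]] := dhelper hr hpos HP ltac:(move: hkl'; rewrite /lastc; lia) hkk ht (etrans hsi hl) hi' hii La Lb.
  split => // HU; exfalso.
  have HU' := L_back_bad (D := D) HPer ltac:(lia) (leqnn i) ltac:(lia) ltac:(rewrite -/p hc; exact: ltnW hgn) HU.
  move: HU'; rewrite -eD (IH _ _ i' hi'); last by rewrite /inloc e'; lia.
  rewrite (labk k k'.+1 k') //; try (by rewrite -hl hL); try lia;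
    try (by move: hkl'; rewrite /lastc; lia); by rewrite e'.
Qed.

Lemma nu_atom AP (p : AP) a x y b : FAtom p <> FUntil a x y b. Proof. by []. Qed.
Lemma nu_and AP (f g : fltl AP) a x y b : FAnd f g <> FUntil a x y b. Proof. by []. Qed.
Lemma nu_neg AP (f : fltl AP) a x y b : FNeg f <> FUntil a x y b. Proof. by []. Qed.
Lemma nu_next AP (f : fltl AP) a x y b : FNext f <> FUntil a x y b. Proof. by []. Qed.

Fixpoint lcons_ind' AP C (K : kripke AP) (P : apsT AP C K) (Q : fltl AP -> nat -> Prop)
  (Hn : forall f l, lcons P f l -> (forall a x y b, f <> FUntil a x y b) -> Q f l)
  (Ha : forall a x y b k l, k < size P -> inloc P k l -> lab_P P l (FUntil a x y b) ->
     lab_P P l b -> Q (FUntil a x y b) l)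
  (Hb : forall a x y b k l, k < size P -> inloc P k l -> lab_P P l (FUntil a x y b) ->
     good a x y (compP P (lastc P)) -> (exists l', inloc P (lastc P) l' /\ lab_P P l' b) ->
     Q (FUntil a x y b) l)
  (Hc : forall a x y b k l, k < size P -> inloc P k l -> a_t (at_loc P l) = TypR ->
    (exists c : C,
      (forall l', l' < l -> a_u (at_loc P l') c = 0%R) /\
      (forall l', l <= l' < lenP P -> lab_P P l' a -> a_u (at_loc P l') c = (y%:Z - x%:Z)%R) /\
      (forall l', l <= l' < lenP P -> ~~ lab_P P l' a -> a_u (at_loc P l') c = (- x%:Z)%R) /\
      (~~ lab_P P l (FUntil a x y b) ->
         ~~ lab_P P l b /\
         forall l', l < l' < lenP P -> lab_P P l' b -> (c, false) \in a_g (at_loc P l')) /\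
      (lab_P P l (FUntil a x y b) ->
         exists l', l < l' < lenP P /\ lab_P P l' b /\ (c, true) \in a_g (at_loc P l'))) ->
    Q (FUntil a x y b) l)
  (Hd : forall a x y b k l k', k < size P -> inloc P k l -> k' < size P ->
    (forall l', inloc P k' l' -> Q (FUntil a x y b) l') ->
      (k = lastc P -> k' < k /\
         periodic (fun f => f = a \/ f = b \/ f = FUntil a x y b) (slice P k' k)) ->
      (k <> lastc P ->
         ((good a x y (compP P k) \/ neutral a x y (compP P k)) /\ ~~ lab_P P l (FUntil a x y b)
          \/ bad a x y (compP P k) /\ lab_P P l (FUntil a x y b)) ->
         k' < k /\
         periodic (fun f => f = a \/ f = b \/ f = FUntil a x y b) (slice P k' k.+1)) ->
      (k <> lastc P ->
         ((good a x y (compP P k) \/ neutral a x y (compP P k)) /\ lab_P P l (FUntil a x y b)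
          \/ bad a x y (compP P k) /\ ~~ lab_P P l (FUntil a x y b)) ->
         k < k' /\ k' <> lastc P /\
         periodic (fun f => f = a \/ f = b \/ f = FUntil a x y b) (slice P k k'.+1)) ->
    Q (FUntil a x y b) l)
  f l (H : lcons P f l) {struct H} : Q f l :=
  match H in @lcons _ _ _ _ f0 l0 return Q f0 l0 with
  | lc_atom p k l h1 h2 h3 h4 => Hn _ _ (lc_atom h1 h2 h3 h4) (@nu_atom _ p)
  | lc_and a b k l h1 h2 h3 h4 => Hn _ _ (lc_and h1 h2 h3 h4) (@nu_and _ a b)
  | lc_neg a k l h1 h2 h3 h4 => Hn _ _ (lc_neg h1 h2 h3 h4) (@nu_neg _ a)
  | lc_next a k l h1 h2 h3 h4 => Hn _ _ (lc_next h1 h2 h3 h4) (@nu_next _ a)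
  | lc_until_a a x y b k l h1 h2 h3 h4 h5 => Ha a x y b k l h1 h2 h4 h5
  | lc_until_b a x y b k l h1 h2 h3 h4 h5 h6 => Hb a x y b k l h1 h2 h4 h5 h6
  | lc_until_c a x y b k l h1 h2 h3 h4 h5 => Hc a x y b k l h1 h2 h4 h5
  | lc_until_d a x y b k l h1 h2 h3 Hex =>
      match Hex with
      | ex_intro k' (conj hk' (conj Hall (conj e1 (conj e2 e3)))) =>
          Hd a x y b k l k' h1 h2 hk'
             (fun l' Hl' => lcons_ind' Hn Ha Hb Hc Hd (Hall l' Hl')) e1 e2 e3
      end
  end.

Lemma lcons_subs AP C (K : kripke AP) (P : apsT AP C K) f l :
  lcons P f l -> subs_ok P (lcons P) f.
Proof. by case. Qed.

Lemma cons_sub AP C (K : kripke AP) (P : apsT AP C K) f g :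
  0 < lenP P -> consistent P f -> (exists h, child h f /\ subf g h) -> consistent P g.
Proof.
move=> hl H hs l hl'; have := lcons_subs (H 0 hl); move/(_ g hs l hl'); done.
Qed.

Lemma sub1 AP (g f : fltl AP) : child g f -> exists h, child h f /\ subf g h.
Proof. by move=> h; exists g; split => //; apply: subf_refl. Qed.

Lemma inv_atom AP C (K : kripke AP) (P : apsT AP C K) p l :
  lcons P (FAtom p) l -> (lab_P P l (FAtom p) <-> p \in klab K (a_st (at_loc P l))).
Proof. by inversion 1. Qed.
Lemma inv_and AP C (K : kripke AP) (P : apsT AP C K) f g l :
  lcons P (FAnd f g) l -> (lab_P P l (FAnd f g) <-> lab_P P l f /\ lab_P P l g).
Proof. by inversion 1. Qed.
Lemma inv_neg AP C (K : kripke AP) (P : apsT AP C K) f l :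
  lcons P (FNeg f) l -> (lab_P P l (FNeg f) <-> ~~ lab_P P l f).
Proof. by inversion 1. Qed.
Lemma inv_next AP C (K : kripke AP) (P : apsT AP C K) f l :
  lcons P (FNext f) l -> forall l', cs_edge P l l' -> (lab_P P l (FNext f) <-> lab_P P l' f).
Proof. by inversion 1. Qed.

Theorem correct AP C (K : kripke AP) (P : apsT AP C K) s :
  runs P s -> hpos_def P -> 0 < size P -> comp_ok P ->
  forall f, consistent P f -> forall i, fsat (stP P s) f i <-> lab_P P (s i) f.
Proof.
move=> hr hpos hsz hc.
have hl0 : 0 < lenP P by have := startP_le_len P 1; rewrite startP_S //; have := hpos 0 hsz; lia.
have hlt := run_lt hr hl0.
elim => [p|f1 IH1 f2 IH2|f1 IH1|f1 IH1|a IHa x y b IHb] Hcons i.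
- by rewrite /= /stP; symmetry; apply: inv_atom; apply: Hcons.
- have H7 := inv_and (Hcons (s i) (hlt i)).
  have C1 := cons_sub hl0 Hcons (sub1 (f := FAnd f1 f2) (or_introl erefl)).
  have C2 := cons_sub hl0 Hcons (sub1 (f := FAnd f1 f2) (or_intror erefl)).
  rewrite /= IH1 // IH2 //; split; [by move=> hh; apply/H7 | by move/H7].
- have H7 := inv_neg (Hcons (s i) (hlt i)).
  have C1 := cons_sub hl0 Hcons (sub1 (f := FNeg f1) erefl).
  rewrite /= IH1 //; split; [by move=> hh; apply/H7; apply/negP | by move/H7/negP].
- have H7 := inv_next (Hcons (s i) (hlt i)).
  have C1 := cons_sub hl0 Hcons (sub1 (f := FNext f1) erefl).
  by rewrite /= IH1 // (H7 _ (run_edge hr i)).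
have Ca := cons_sub hl0 Hcons (sub1 (f := FUntil a x y b) (or_introl erefl)).
have Cb := cons_sub hl0 Hcons (sub1 (f := FUntil a x y b) (or_intror erefl)).
have Ha : forall j, fsat (stP P s) a j <-> labf P s a j by move=> j; apply: IHa.
have Hb : forall j, fsat (stP P s) b j <-> labf P s b j by move=> j; apply: IHb.
rewrite (fsat_until _ _ _ Ha Hb).
pose Q g l := g = FUntil a x y b -> forall i, s i = l ->
  (Usem (labf P s a) (labf P s b) x y i <-> lab_P P l g).
suff : Q (FUntil a x y b) (s i) by move/(_ erefl i erefl).
apply: (lcons_ind' (Q := Q)) (Hcons (s i) (hlt i)).
- by move=> f l _ hn e; exfalso; apply: (hn _ _ _ _ e).
- move=> a' x' y' b' k l hk hin hL hb [<- <- <- <-] j hj; rewrite hL; split => // _.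
  by left; rewrite /labf hj.
- move=> a' x' y' b' k l hk hin hL hg hex [<- <- <- <-] j hj; rewrite hL; split => // _.
  exact: case_b hr hpos hsz hg hex.
- move=> a' x' y' b' k l hk hin hR [c [h1 [h2 [h3 [h4 h5]]]]] [ea ex ey eb] j hj; subst a' x' y' b'.
  exact: (case_c hr hc hl0 hj hR Hb h1 h2 h3 h4 h5).
- move=> a' x' y' b' k l k' hk hin hk' IH e1 e2 e3 [ea ex ey eb] j hj; subst a' x' y' b'.
  apply: (case_d hr hpos hsz hk hin hj hk' _ e1 e2 e3).
  by move=> l' hl' i' hi'; apply: (IH l' hl' erefl i' hi').
Qed.


Theorem lemma8 (AP C : finType) (K : kripke AP) (phi psi : fltl AP) (x y : nat)
    (P : seq (seq (astate AP (kS K) C))) :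
  flat K ->
  wf_form (FUntil phi x y psi) ->
  is_aps P (FUntil phi x y psi) ->
  consistent P phi -> consistent P psi ->
  forall k, k < lastc P -> is_loop (compP P k) ->
  forall sigma : nat -> nat, runs P sigma ->
  forall (u : seq nat) (n : nat) (w : nat -> nat),
    size (compP P k) * y + 2 <= n ->
    (forall i, sigma i = uvw u (locs P k) n w i) ->
    exists n1 n2,
      n = n1 + size (compP P k) * y + n2 /\
      forall i,
        (size u <= i < size u + (n1 - 1) * size (compP P k)
         \/ size u + (n1 + size (compP P k) * y) * size (compP P k) <= i
              < size u + (n1 + size (compP P k) * y + n2 - 2) * size (compP P k)) ->
        (sat_P P sigma (FUntil phi x y psi) i <->
         sat_P P sigma (FUntil phi x y psi) (i + size (compP P k))).
Proof.
move=> _ [hxy [hy _]] [hsz [hcomp _]] Cphi Cpsi k hk hloop sigma hr u n w hn hsig.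
have hpos : hpos_def P.
  by move=> k' hk'; case: (hcomp k' hk') => [[]|[]].
have hc : comp_ok P by [].
have Ha := correct hr hpos hsz hc Cphi.
have Hb := correct hr hpos hsz hc Cpsi.
set p := size (compP P k).
have hp : 0 < p by case: hloop.
have HPer : Per (labf P sigma phi) (labf P sigma psi) p (size u) (size u + n * p - 1).
  move=> j hj hjE.
  have e : forall j', size u <= j' < size u + n * p ->
      sigma j' = nth 0 (locs P k) ((j' - size u) %% p).
    by move=> j' /andP [h1 h2]; rewrite hsig /uvw ltnNge h1 /= size_iota -/p h2.
  have e1 := e j ltac:(lia); have e2 := e (j + p) ltac:(lia).
  rewrite /labf e1 e2.
  have -> : j + p - size u = (j - size u) + p by lia.
  by rewrite modnDr.
have [n1 [n2 [en H]]] := core hp hy hxy hn HPer.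
exists n1, n2; split => // i hi.
rewrite /sat_P !(fsat_until _ _ _ Ha Hb).
exact: H.
Qed.
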